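(* Consider $n$ agents over a fixed undirected connected graph with symmetric nonnegative weights $a_{ij}$ ($a_{ij}>0$ iff $i,j$ are neighbors). Assume the CFP solution set $\mathbf{X}^*$ is non-empty and there is $K\ge0$ with $\|\nabla g_i^+(x)\|\le K$ for all $x$ and $i$. Let $\{\alpha(t)\},\{\beta(t)\}$ satisfy (a) $\alpha(t)\in[0,1]$, $\sum_t\alpha(t)=\infty$, $\sum_t\alpha^2(t)<\infty$; (b) $\beta(t)\ge0$, $\sum_t\beta(t)=\infty$, $\sum_t\beta^2(t)<\infty$. Let $0<h<\frac{1}{\max_{1\le i\le n}\sum_{j=1}^n a_{ij}}$. The states $x_i(t)\in\mathbb{R}^m$ evolve by $x_i(t+1)=x_i(t)+u_i(t)$ with $$y_i(t)=x_i(t)+h\sum_{j\in N_i}a_{ij}(x_j(t)-x_i(t)),\ \nabla_i(t)=\beta(t)\nabla g_i^+(y_i(t)),\ \xi_i(t)=y_i(t)-\nabla_i(t),$$ $$\varphi_i(t)=\alpha(t)\big(\xi_i(t)-P_{X_i}(\xi_i(t))\big),\ u_i(t)=h\sum_{j\in N_i}a_{ij}(x_j(t)-x_i(t))-\nabla_i(t)-\varphi_i(t).$$ Then the agents reach consensus asymptotically and there is $x^*\in\mathbf{X}^*$ with $\lim_{t\to\infty}x_i(t)=x^*$ for all $i$.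
   Context: For each $i$, $g_i:\mathbb{R}^m\to\mathbb{R}$ convex continuous, $X_i\subset\mathbb{R}^m$ closed convex, $X=\bigcap_iX_i$; the CFP asks for $x$ with $g_i(x)\le0$ for all $i$ and $x\in X$, with solution set $\mathbf{X}^*$. $g_i^+=\max[g_i,0]$; $\nabla g_i^+(y)$ a subgradient of $g_i^+$ at $y$ (chosen as $0$ if $g_i(y)\le0$ and as a subgradient of $g_i$ otherwise); $P_{X_i}$ Euclidean projection onto $X_i$. Consensus means $\|x_i(t)-x_j(t)\|\to0$ for all $i,j$. *)

(* Defs.v *)
From HB Require Import structures.
From mathcomp Require Import all_boot all_order all_algebra.
From mathcomp Require Import all_classical all_reals all_analysis.
Set Implicit Arguments. Unset Strict Implicit. Unset Printing Implicit Defensive.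
Import Order.TTheory GRing.Theory Num.Theory.
Import numFieldNormedType.Exports.
Local Open Scope classical_set_scope.
Local Open Scope ring_scope.

Section CFP.
Variable R : realType.
Variable m : nat.
Notation vec := 'rV[R]_m.

Definition dotv (u v : vec) : R := \sum_(k < m) u ord0 k * v ord0 k.
Definition norm2 (u : vec) : R := Num.sqrt (dotv u u).

Definition convex_fun (f : vec -> R) : Prop :=
  forall x y (l : R), 0 <= l <= 1 ->
    f (l *: x + (1 - l) *: y) <= l * f x + (1 - l) * f y.

Definition is_projection (C : set vec) (P : vec -> vec) : Prop :=
  forall x, C (P x) /\ forall z, C z -> norm2 (x - P x) <= norm2 (x - z).

Definition is_subgradient (f : vec -> R) (y d : vec) : Prop :=
  forall z, f y + dotv d (z - y) <= f z.

(* G y is the chosen subgradient of g^+ = max(g,0) at y: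
   0 if g y <= 0, a subgradient of g otherwise *)
Definition is_plus_subgradient_sel (g : vec -> R) (G : vec -> vec) : Prop :=
  forall y, (g y <= 0 -> G y = 0) /\ (0 < g y -> is_subgradient g y (G y)).

End CFP.

Definition adj (R : realType) (n : nat) (a : 'I_n -> 'I_n -> R) : rel 'I_n :=
  fun i j => (i != j) && (0 < a i j).

Definition graph_connected (R : realType) (n : nat) (a : 'I_n -> 'I_n -> R) :=
  forall i j : 'I_n, connect (adj a) i j.

Definition cons_term (R : realType) (n m : nat) (a : 'I_n -> 'I_n -> R) (h : R)
  (z : 'I_n -> 'rV[R]_m) (i : 'I_n) : 'rV[R]_m :=
  h *: \sum_(j < n | adj a i j) a i j *: (z j - z i).

Definition control (R : realType) (n m : nat) (a : 'I_n -> 'I_n -> R) (h : R)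
  (G : 'I_n -> 'rV[R]_m -> 'rV[R]_m) (P : 'I_n -> 'rV[R]_m -> 'rV[R]_m)
  (al be : R) (z : 'I_n -> 'rV[R]_m) (i : 'I_n) : 'rV[R]_m :=
  let y := z i + cons_term a h z i in
  let nab := be *: G i y in
  let xi := y - nab in
  let phi := al *: (xi - P i xi) in
  cons_term a h z i - nab - phi.

(* Main.v *)
Require Import Defs.
From HB Require Import structures.
From mathcomp Require Import all_boot all_order all_algebra.
From mathcomp Require Import all_classical all_reals all_analysis.
From mathcomp Require Import ring lra.
Import Order.TTheory GRing.Theory Num.Theory.
Import numFieldNormedType.Exports.
Local Open Scope classical_set_scope.
Local Open Scope ring_scope.

Section Vec.
Context {R : realType} {m : nat}.
Local Notation vec := 'rV[R]_m.
Implicit Types u v w : vec.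

Definition nsq u := dotv u u.

Lemma dotvC u v : dotv u v = dotv v u.
Proof. by rewrite /dotv; apply: eq_bigr => k _; rewrite mulrC. Qed.

Lemma dotvDl u v w : dotv (u + v) w = dotv u w + dotv v w.
Proof. by rewrite /dotv -big_split; apply: eq_bigr => k _; rewrite mxE mulrDl. Qed.

Lemma dotvDr u v w : dotv w (u + v) = dotv w u + dotv w v.
Proof. by rewrite !(dotvC w) dotvDl. Qed.

Lemma dotvZl c u v : dotv (c *: u) v = c * dotv u v.
Proof. by rewrite /dotv mulr_sumr; apply: eq_bigr => k _; rewrite mxE mulrA. Qed.

Lemma dotvZr c u v : dotv v (c *: u) = c * dotv v u.
Proof. by rewrite !(dotvC v) dotvZl. Qed.

Lemma dotv0l v : dotv 0 v = 0.
Proof. by rewrite /dotv big1 // => k _; rewrite mxE mul0r. Qed.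

Lemma dotv0r v : dotv v 0 = 0.
Proof. by rewrite dotvC dotv0l. Qed.

Lemma dotvNl u v : dotv (- u) v = - dotv u v.
Proof. by rewrite -scaleN1r dotvZl mulN1r. Qed.

Lemma dotvNr u v : dotv v (- u) = - dotv v u.
Proof. by rewrite !(dotvC v) dotvNl. Qed.

Lemma dotvBl u v w : dotv (u - v) w = dotv u w - dotv v w.
Proof. by rewrite dotvDl dotvNl. Qed.

Lemma dotvBr u v w : dotv w (u - v) = dotv w u - dotv w v.
Proof. by rewrite dotvDr dotvNr. Qed.

Lemma dotv_suml (I : Type) (r : seq I) (P : pred I) (f : I -> vec) v :
  dotv (\sum_(i <- r | P i) f i) v = \sum_(i <- r | P i) dotv (f i) v.
Proof.
exact: (big_morph (fun u => dotv u v) (fun u w => dotvDl u w v) (dotv0l v)).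
Qed.

Lemma dotv_sumr (I : Type) (r : seq I) (P : pred I) (f : I -> vec) v :
  dotv v (\sum_(i <- r | P i) f i) = \sum_(i <- r | P i) dotv v (f i).
Proof.
rewrite dotvC dotv_suml; apply: eq_bigr => i _; exact: dotvC.
Qed.

Lemma nsq_ge0 u : 0 <= nsq u.
Proof. by apply: sumr_ge0 => k _; rewrite -expr2 sqr_ge0. Qed.

Lemma nsq_eq0 u : nsq u = 0 -> u = 0.
Proof.
move=> /eqP; rewrite psumr_eq0; last by move=> k _; rewrite -expr2 sqr_ge0.
move=> /allP H; apply/rowP => k; rewrite mxE.
by have := H k (mem_index_enum k); rewrite /= mulf_eq0 orbb => /eqP.
Qed.

Lemma nsqD u v : nsq (u + v) = nsq u + 2 * dotv u v + nsq v.
Proof.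
rewrite /nsq !dotvDl !dotvDr (dotvC v u); ring.
Qed.

Lemma nsqB u v : nsq (u - v) = nsq u - 2 * dotv u v + nsq v.
Proof.
rewrite /nsq !dotvBl !dotvBr (dotvC v u); ring.
Qed.

Lemma nsqN u : nsq (- u) = nsq u.
Proof. by rewrite /nsq dotvNl dotvNr opprK. Qed.

Lemma nsqZ c u : nsq (c *: u) = c ^+ 2 * nsq u.
Proof. by rewrite /nsq dotvZl dotvZr mulrA expr2. Qed.

Lemma nsq_sym u v : nsq (u - v) = nsq (v - u).
Proof. by rewrite -nsqN opprB. Qed.

Lemma dotv_le u v : 2 * dotv u v <= nsq u + nsq v.
Proof.
have := nsq_ge0 (u - v); rewrite nsqB; lra.
Qed.

Lemma nsq_le2 u v : nsq (u + v) <= 2 * nsq u + 2 * nsq v.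
Proof. rewrite nsqD; have := dotv_le u v; lra. Qed.

Lemma norm2E u : norm2 u = Num.sqrt (nsq u).
Proof. by []. Qed.

Lemma norm2_ge0 u : 0 <= norm2 u.
Proof. exact: sqrtr_ge0. Qed.

Lemma sqr_norm2 u : norm2 u ^+ 2 = nsq u.
Proof. by rewrite norm2E sqr_sqrtr // nsq_ge0. Qed.

Lemma norm2_le u v : (norm2 u <= norm2 v) = (nsq u <= nsq v).
Proof. by rewrite !norm2E ler_sqrt // nsq_ge0. Qed.

Lemma norm2_lt u v : (norm2 u < norm2 v) = (nsq u < nsq v).
Proof.
by rewrite ltNge norm2_le -ltNge.
Qed.

Lemma norm2_le_r u c : 0 <= c -> (norm2 u <= c) = (nsq u <= c ^+ 2).
Proof.
move=> c0; rewrite norm2E -[in LHS](@ger0_norm _ c) // -sqrtr_sqr ler_sqrt //.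
exact: sqr_ge0.
Qed.

Lemma norm2_lt_r u c : 0 < c -> (norm2 u < c) = (nsq u < c ^+ 2).
Proof.
move=> c0; rewrite norm2E -[in LHS](@gtr0_norm _ c) // -sqrtr_sqr ltr_sqrt //.
exact: exprn_gt0.
Qed.

Lemma CS u v : dotv u v <= norm2 u * norm2 v.
Proof.
have key : dotv u v ^+ 2 <= nsq u * nsq v.
  have [v0|vpos] := eqVneq (nsq v) 0.
    by rewrite (nsq_eq0 _ v0) dotv0r /nsq dotv0l expr0n mulr0.
  have vp : 0 < nsq v by rewrite lt_neqAle eq_sym vpos nsq_ge0.
  have := nsq_ge0 (u - (dotv u v / nsq v) *: v).
  rewrite nsqB nsqZ dotvZr => H.
  have H2 : 0 <= nsq u * nsq v - dotv u v ^+ 2.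
    have -> : nsq u * nsq v - dotv u v ^+ 2 =
       nsq v * (nsq u - 2 * (dotv u v / nsq v * dotv u v) +
                (dotv u v / nsq v) ^+ 2 * nsq v).
      by field; rewrite vpos.
    by apply: mulr_ge0 => //; exact: ltW.
  lra.
rewrite -(@ler_sqrt _ (dotv u v ^+ 2)) in key; last first.
  by apply: mulr_ge0; exact: nsq_ge0.
rewrite sqrtr_sqr sqrtrM ?nsq_ge0 // in key.
exact: le_trans (ler_norm _) key.
Qed.

Lemma norm2D u v : norm2 (u + v) <= norm2 u + norm2 v.
Proof.
rewrite norm2_le_r; last by rewrite addr_ge0 // norm2_ge0.
rewrite nsqD sqrrD !sqr_norm2; have := CS u v; lra.
Qed.

Lemma norm2Z c u : norm2 (c *: u) = `|c| * norm2 u.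
Proof.
by rewrite !norm2E nsqZ sqrtrM ?sqr_ge0 // sqrtr_sqr.
Qed.

Lemma norm2N u : norm2 (- u) = norm2 u.
Proof. by rewrite !norm2E nsqN. Qed.

Lemma norm2_sym u v : norm2 (u - v) = norm2 (v - u).
Proof. by rewrite -norm2N opprB. Qed.

Lemma norm2_0 : norm2 (0 : vec) = 0.
Proof. by rewrite norm2E /nsq dotv0l sqrtr0. Qed.

Lemma norm2_sum (I : Type) (r : seq I) (P : pred I) (f : I -> vec) :
  norm2 (\sum_(i <- r | P i) f i) <= \sum_(i <- r | P i) norm2 (f i).
Proof.
elim/big_rec2: _ => [|i y1 y2 _ H]; first by rewrite norm2_0.
exact: le_trans (norm2D _ _) (lerD (lexx _) H).
Qed.

Lemma norm2_tri u v w : norm2 (u - w) <= norm2 (u - v) + norm2 (v - w).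
Proof.
have -> : u - w = (u - v) + (v - w) by rewrite addrA subrK.
exact: norm2D.
Qed.

Lemma coord_le u k : `|u ord0 k| <= norm2 u.
Proof.
rewrite -sqrtr_sqr norm2E ler_sqrt ?nsq_ge0 // /nsq /dotv.
rewrite (bigD1 k) //= -expr2 lerDl; apply: sumr_ge0 => j _.
by rewrite -expr2 sqr_ge0.
Qed.

Lemma nsq_le_max u M : (forall k, `|u ord0 k| <= M) -> nsq u <= m%:R * M ^+ 2.
Proof.
move=> H; rewrite /nsq /dotv.
have -> : m%:R * M ^+ 2 = \sum_(k < m) M ^+ 2 by rewrite sumr_const card_ord mulr_natl.
apply: ler_sum => k _; rewrite -expr2 -real_normK ?num_real //.
by apply: lerXn2r; rewrite ?nnegrE ?normr_ge0 // (le_trans _ (H k)).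
Qed.

End Vec.

Section Proj.
Context {R : realType} {m : nat}.
Local Notation vec := 'rV[R]_m.
Implicit Types u v w x y z : vec.

Lemma conv_in {C : set vec} : convex_set C -> forall z p (l : R), 0 <= l -> l <= 1 ->
  C z -> C p -> C (p + l *: (z - p)).
Proof.
move=> HC z p l l0 l1 Cz Cp.
have := HC z p (Itv01 l0 l1) (mem_set Cz) (mem_set Cp).
move/set_mem; congr C.
rewrite [LHS]/conv /=; rewrite /GRing.Lmodule.sort /= /unstable.onem.
by rewrite scalerBl scale1r scalerBr addrCA addrA.
Qed.

Lemma proj_vi {C : set vec} {P : vec -> vec} : is_projection C P -> convex_set C ->
  forall x z, C z -> dotv (x - P x) (z - P x) <= 0.
Proof.
move=> HP HC x z Cz.
have [CPx Hmin] := HP x.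
set p := P x in CPx Hmin *.
set c := dotv (x - p) (z - p).
set q := nsq (z - p).
rewrite leNgt; apply/negP => cpos.
have q0 : 0 <= q := nsq_ge0 _.
have cq : 0 < c + q by lra.
set l := c / (c + q).
have l0 : 0 < l by rewrite divr_gt0.
have l1 : l <= 1 by rewrite ler_pdivrMr // mul1r; lra.
have lq : l * q < c.
  rewrite /l mulrAC ltr_pdivrMr //.
  have : 0 < c * c by rewrite mulr_gt0.
  lra.
have := Hmin _ (conv_in HC _ _ _ (ltW l0) l1 Cz CPx).
rewrite norm2_le.
have -> : x - (p + l *: (z - p)) = (x - p) - l *: (z - p).
  by rewrite opprD addrA.
rewrite [nsq (_ - l *: _)]nsqB nsqZ dotvZr -/c -/q => H.
have : 0 < l * (2 * c - l * q) by apply: mulr_gt0 => //; lra.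
nra.
Qed.

Lemma proj_step {C : set vec} {P : vec -> vec} al x z : is_projection C P -> convex_set C ->
  C z -> 0 <= al -> al <= 1 ->
  nsq (x - al *: (x - P x) - z) <= nsq (x - z) - al * nsq (x - P x).
Proof.
move=> HP HC Cz a0 a1.
have vi := proj_vi HP HC x z Cz.
set d := x - P x in vi *.
have -> : x - al *: d - z = (x - z) - al *: d by rewrite addrAC.
rewrite [nsq (_ - al *: _)]nsqB nsqZ dotvZr.
have -> : dotv (x - z) d = nsq d - dotv d (z - P x).
  have -> : x - z = d - (z - P x) by rewrite /d opprB addrA subrK.
  by rewrite dotvBl dotvC.
have nd := nsq_ge0 d.
have h1 : al * dotv d (z - P x) <= 0 by rewrite mulr_ge0_le0.
have h2 : al ^+ 2 * nsq d <= al * nsq d.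
  by rewrite ler_wpM2r // expr2 ler_piMr.
lra.
Qed.

Lemma proj_le {C : set vec} {P : vec -> vec} x z : is_projection C P -> C z ->
  norm2 (x - P x) <= norm2 (x - z).
Proof. by move=> HP Cz; have [_ H] := HP x; exact: H. Qed.

Lemma dist_lip {C : set vec} {P : vec -> vec} x y : is_projection C P ->
  norm2 (x - P x) <= norm2 (x - y) + norm2 (y - P y).
Proof.
move=> HP; have [CPy _] := HP y.
exact: le_trans (proj_le x (P y) HP CPy) (norm2_tri _ _ _).
Qed.

Definition gp (g : vec -> R) y := Num.max (g y) 0.

Lemma gp_ge0 g y : 0 <= gp g y.
Proof. by rewrite /gp le_max lexx orbT. Qed.

Lemma sub_step {g G} K z y be : is_plus_subgradient_sel g G ->
  (forall y, norm2 (G y) <= K) -> g z <= 0 -> 0 <= be ->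
  nsq (y - be *: G y - z) <= nsq (y - z) - 2 * be * gp g y + be ^+ 2 * K ^+ 2.
Proof.
move=> HG HK gz b0.
have K0 : 0 <= K := le_trans (norm2_ge0 _) (HK y).
have [H1 H2] := HG y.
have [gy|gy] := leP (g y) 0.
  rewrite (H1 gy) scaler0 subr0 /gp (max_idPr gy) mulr0 subr0 lerDl.
  by rewrite mulr_ge0 // sqr_ge0.
have Hs := H2 gy z.
have -> : y - be *: G y - z = (y - z) - be *: G y by rewrite addrAC.
rewrite [nsq (_ - be *: _)]nsqB nsqZ dotvZr /gp (max_idPl (ltW gy)).
have nG : nsq (G y) <= K ^+ 2 by rewrite -norm2_le_r.
have : dotv (G y) (z - y) = - dotv (y - z) (G y).
  by rewrite dotvC -dotvNl opprB.
have : 0 <= be ^+ 2 by rewrite sqr_ge0.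
nra.
Qed.

Lemma gp_lip {g G} K x y : is_plus_subgradient_sel g G ->
  (forall y, norm2 (G y) <= K) ->
  gp g x - gp g y <= K * norm2 (x - y).
Proof.
move=> HG HK.
have K0 : 0 <= K := le_trans (norm2_ge0 _) (HK y).
have [H1 H2] := HG x.
have [gx|gx] := leP (g x) 0.
  rewrite /gp (max_idPr gx) sub0r.
  apply: le_trans (_ : 0 <= _); first by rewrite oppr_le0 -/(gp g y) gp_ge0.
  by rewrite mulr_ge0 // norm2_ge0.
have Hs := H2 gx y.
rewrite /gp (max_idPl (ltW gx)).
have gyy : g y <= Num.max (g y) 0 by rewrite le_max lexx.
have : dotv (G x) (y - x) = - dotv (G x) (x - y) by rewrite -dotvNr opprB.
have := CS (G x) (x - y).
have := HK x.
have := norm2_ge0 (x - y).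
nra.
Qed.

End Proj.

Section Var.
Context {R : realType} {m n : nat}.
Local Notation vec := 'rV[R]_m.

Lemma var_id (w : 'I_n -> R) (v : 'I_n -> vec) z :
  \sum_(j < n) w j = 1 ->
  \sum_(j < n) w j * nsq (v j - z) =
  nsq (\sum_(j < n) w j *: v j - z) +
  \sum_(j < n) w j * nsq (v j - \sum_(k < n) w k *: v k).
Proof.
move=> w1.
set yb := \sum_(k < n) w k *: v k.
have ybz : yb - z = \sum_(j < n) w j *: (v j - z).
  under eq_bigr do rewrite scalerBr.
  by rewrite sumrB -scaler_suml w1 scale1r.
have E : forall j, v j - yb = (v j - z) - (yb - z).
  by move=> j; rewrite opprB addrA subrK.
under [X in _ = _ + X]eq_bigr do rewrite E nsqB !mulrDr mulrN.
rewrite big_split /= sumrB -!mulr_suml w1 mul1r.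
have -> : \sum_(i < n) w i * (2 * dotv (v i - z) (yb - z)) =
          2 * nsq (yb - z).
  rewrite /nsq [X in dotv X _]ybz dotv_suml mulr_sumr; apply: eq_bigr => i _.
  by rewrite dotvZl mulrCA.
ring.
Qed.

End Var.

Section Cons.
Context {R : realType} {m n : nat}.
Local Notation vec := 'rV[R]_m.
Variable a : 'I_n -> 'I_n -> R.
Variable h : R.
Hypothesis asym : forall i j, a i j = a j i.
Hypothesis a_ge0 : forall i j, 0 <= a i j.
Hypothesis h_gt0 : 0 < h.
Hypothesis hdeg : forall i, h * (\sum_(j < n) a i j) < 1.

Definition wt i j := h * a i j + (i == j)%:R * (1 - h * \sum_(k < n) a i k).

Lemma sum_delta (c : 'I_n -> R) i : \sum_(j < n) (i == j)%:R * c j = c i.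
Proof.
rewrite (bigD1 i) //= eqxx mul1r big1 ?addr0 // => j /negPf ji.
by rewrite eq_sym ji mul0r.
Qed.

Lemma sum_deltav (c : 'I_n -> vec) i : \sum_(j < n) (i == j)%:R *: c j = c i.
Proof.
rewrite (bigD1 i) //= eqxx scale1r big1 ?addr0 // => j /negPf ji.
by rewrite eq_sym ji scale0r.
Qed.

Lemma wt_sum1 i : \sum_(j < n) wt i j = 1.
Proof.
rewrite /wt big_split /= -mulr_sumr.
rewrite (sum_delta (fun _ => 1 - h * \sum_(k < n) a i k)); ring.
Qed.

Lemma wt_sym i j : wt i j = wt j i.
Proof.
rewrite /wt asym; case: (eqVneq i j) => [->//|ne].
by rewrite !mul0r.
Qed.

Lemma wt_ge0 i j : 0 <= wt i j.
Proof.
rewrite /wt addr_ge0 ?mulr_ge0 ?ler0n //; first exact: ltW.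
by have := hdeg i; lra.
Qed.

Lemma wt_diag i : 0 < wt i i.
Proof.
rewrite /wt eqxx mul1r; have := hdeg i; have := a_ge0 i i.
have : 0 < h by [].
nra.
Qed.

Lemma wt_adj i j : adj a i j -> 0 < wt i j.
Proof.
case/andP => /negPf ne aij; rewrite /wt ne mul0r addr0; exact: mulr_gt0.
Qed.

Lemma cons_eq (z : 'I_n -> vec) i :
  z i + cons_term a h z i = \sum_(j < n) wt i j *: z j.
Proof.
rewrite /cons_term.
have -> : \sum_(j < n | adj a i j) a i j *: (z j - z i) =
          \sum_(j < n) a i j *: (z j - z i).
  rewrite big_mkcond; apply: eq_bigr => j _; case: ifP => // nadj.
  case: (eqVneq i j) => [->|ne]; first by rewrite subrr scaler0.
  move: nadj; rewrite /adj ne /= => /negbT; rewrite -leNgt => aij.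
  have -> : a i j = 0 by apply/eqP; rewrite eq_le aij a_ge0.
  by rewrite scale0r.
rewrite /wt.
under [in RHS]eq_bigr do rewrite scalerDl -!scalerA.
rewrite big_split /= sum_deltav.
rewrite -scaler_sumr.
under [in LHS]eq_bigr do rewrite scalerBr.
rewrite sumrB -scaler_suml.
rewrite scalerBr scalerBl scale1r scalerA.
by rewrite addrCA.
Qed.

Lemma sum_mix (z : 'I_n -> vec) :
  \sum_(i < n) \sum_(j < n) wt i j *: z j = \sum_(j < n) z j.
Proof.
rewrite exchange_big /=; apply: eq_bigr => j _.
rewrite -scaler_suml.
under eq_bigr do rewrite wt_sym.
by rewrite wt_sum1 scale1r.
Qed.

Lemma sum_mixR (c : 'I_n -> R) :
  \sum_(i < n) \sum_(j < n) wt i j * c j = \sum_(j < n) c j.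
Proof.
rewrite exchange_big /=; apply: eq_bigr => j _.
rewrite -mulr_suml.
under eq_bigr do rewrite wt_sym.
by rewrite wt_sum1 mul1r.
Qed.


Definition Dis (x : 'I_n -> vec) i :=
  \sum_(j < n) wt i j * nsq (x j - \sum_(k < n) wt i k *: x k).

Lemma cons_V (x : 'I_n -> vec) z :
  \sum_(i < n) nsq (\sum_(j < n) wt i j *: x j - z) + \sum_(i < n) Dis x i =
  \sum_(i < n) nsq (x i - z).
Proof.
rewrite -big_split /=.
under eq_bigr do rewrite -var_id ?wt_sum1 //.
exact: sum_mixR.
Qed.

Lemma Dis_ge0 x i : 0 <= Dis x i.
Proof. by apply: sumr_ge0 => j _; rewrite mulr_ge0 ?wt_ge0 ?nsq_ge0. Qed.

Lemma Dis_term x i j :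
  wt i j * nsq (x j - \sum_(k < n) wt i k *: x k) <= Dis x i.
Proof.
rewrite /Dis [X in _ <= X](bigD1 j) //= lerDl; apply: sumr_ge0 => k _.
by rewrite mulr_ge0 ?wt_ge0 ?nsq_ge0.
Qed.

Lemma Dis_edge x i k : adj a i k ->
  nsq (x k - x i) <= (2 / wt i k + 2 / wt i i) * Dis x i.
Proof.
move=> aik.
set y := \sum_(j < n) wt i j *: x j.
have e1 := Dis_term x i k; have e2 := Dis_term x i i.
rewrite -/y in e1 e2.
have p1 := wt_adj _ _ aik; have p2 := wt_diag i.
have -> : x k - x i = (x k - y) + (y - x i) by rewrite addrA subrK.
apply: le_trans (nsq_le2 _ _) _.
rewrite (nsq_sym y).
have f1 : nsq (x k - y) <= Dis x i / wt i k by rewrite ler_pdivlMr // mulrC.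
have f2 : nsq (x i - y) <= Dis x i / wt i i by rewrite ler_pdivlMr // mulrC.
have -> : (2 / wt i k + 2 / wt i i) * Dis x i =
  2 * (Dis x i / wt i k) + 2 * (Dis x i / wt i i) by ring.
lra.
Qed.

End Cons.


Section Seqs.
Context {R : realType}.
Implicit Types u p : nat -> R.

Lemma psum_split u {s t} : (s <= t)%N ->
  \sum_(0 <= k < t) u k = \sum_(0 <= k < s) u k + \sum_(s <= k < t) u k.
Proof. by move=> st; rewrite (big_cat_nat (leq0n s) st). Qed.

Lemma psum_ge0 u s t : (forall k, 0 <= u k) -> 0 <= \sum_(s <= k < t) u k.
Proof. by move=> H; apply: sumr_ge0 => k _. Qed.

Lemma psum_mono {u} {s t} : (forall k, 0 <= u k) -> (s <= t)%N ->
  \sum_(0 <= k < s) u k <= \sum_(0 <= k < t) u k.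
Proof.
by move=> H st; rewrite (psum_split u st) lerDl psum_ge0.
Qed.

Lemma tail_small {u B} : (forall k, 0 <= u k) ->
  (forall t, \sum_(0 <= k < t) u k <= B) ->
  forall e, 0 < e -> exists N, forall s t, (N <= s)%N -> \sum_(s <= k < t) u k < e.
Proof.
move=> u0 uB e e0.
set S := fun t => \sum_(0 <= k < t) u k.
have hs : has_sup (range S).
  by split; [exists (S 0%N), 0%N | exists B => _ [t _ <-]; exact: uB].
have [_ [p _ <-] Hp] := sup_adherent e0 hs.
exists p => s t ps.
have Sle : forall t, S t <= sup (range S).
  by move=> t'; have /ubP := sup_upper_bound hs; apply; exists t'.
have [st|ts] := leqP s t.
  have E := psum_split u st.
  have := Sle t; have := psum_mono u0 ps.
  rewrite -/(S t) -/(S s) -/(S p) in E *.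
  lra.
by rewrite big_geq ?(ltnW ts).
Qed.

Lemma small_eventually {u B} : (forall k, 0 <= u k) ->
  (forall t, \sum_(0 <= k < t) u k <= B) ->
  forall e, 0 < e -> exists N, forall t, (N <= t)%N -> u t < e.
Proof.
move=> u0 uB e e0; have [N HN] := tail_small u0 uB e e0.
exists N => t Nt; have := HN t t.+1 Nt; by rewrite big_nat1.
Qed.

Lemma series_bound u : (forall k, 0 <= u k) ->
  cvg (\sum_(0 <= k < t) u k @[t --> \oo]) ->
  forall t, \sum_(0 <= k < t) u k <= limn (fun t => \sum_(0 <= k < t) u k).
Proof.
move=> u0 cu t.
apply: (@nondecreasing_cvgn_le _ (fun t => \sum_(0 <= k < t) u k)) => //.
by apply/nondecreasing_seqP => k; rewrite big_nat_recr //= lerDl.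
Qed.

Lemma div_big {u} : (\sum_(0 <= k < t) u k @[t --> \oo] --> +oo) ->
  forall A, exists N, forall t, (N <= t)%N -> A <= \sum_(0 <= k < t) u k.
Proof.
move=> /cvgryPge H A; have [N _ HN] := H A.
by exists N => t Nt; apply: HN.
Qed.

Lemma dom_bounded {u p C N Bp} : (forall k, 0 <= u k) -> (forall k, 0 <= p k) ->
  0 <= C -> (forall t, \sum_(0 <= k < t) p k <= Bp) ->
  (forall t, (N <= t)%N -> u t <= C * p t) ->
  forall t, \sum_(0 <= k < t) u k <= \sum_(0 <= k < N) u k + C * Bp.
Proof.
move=> u0 p0 C0 pB H t.
have CB : 0 <= C * Bp.
  by apply: mulr_ge0 => //; apply: le_trans (pB 0%N); rewrite big_geq.
have [Nt|tN] := leqP N t.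
  rewrite (psum_split u Nt) lerD2l.
  apply: le_trans (_ : C * \sum_(N <= k < t) p k <= _).
    rewrite mulr_sumr big_nat_cond [X in _ <= X]big_nat_cond.
    by apply: ler_sum => k /andP[/andP[Nk _] _]; apply: H.
  apply: ler_wpM2l => //; apply: le_trans (pB t).
  by rewrite (psum_split p Nt) lerDr psum_ge0.
by apply: le_trans (psum_mono u0 (ltnW tN)) _; rewrite lerDl.
Qed.

Lemma dom_contra {u p C N Bp} : (forall k, 0 <= u k) -> (forall k, 0 <= p k) ->
  0 <= C -> (forall t, \sum_(0 <= k < t) p k <= Bp) ->
  (\sum_(0 <= k < t) u k @[t --> \oo] --> +oo) ->
  ~ (forall t, (N <= t)%N -> u t <= C * p t).
Proof.
move=> u0 p0 C0 pB ud H.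
have Hb := dom_bounded u0 p0 C0 pB H.
have [T HT] := div_big ud (\sum_(0 <= k < N) u k + C * Bp + 1).
have := HT T (leqnn T); have := Hb T; lra.
Qed.

Lemma crossing phi p al be C M l1 l2 N0 Bp :
  (forall k, 0 <= p k) -> (forall t, \sum_(0 <= k < t) p k <= Bp) ->
  (forall k, 0 <= al k) -> (forall k, 0 <= be k) ->
  (forall e, 0 < e -> exists N, forall t, (N <= t)%N -> al t < e) ->
  (forall e, 0 < e -> exists N, forall t, (N <= t)%N -> be t < e) ->
  (\sum_(0 <= k < t) al k @[t --> \oo] --> +oo) ->
  (\sum_(0 <= k < t) be k @[t --> \oo] --> +oo) ->
  l1 < l2 -> 0 <= C -> 0 <= M ->
  (forall t, (N0 <= t)%N -> l1 <= phi t -> be t <= C * p t) ->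
  (forall t, (N0 <= t)%N -> phi t <= l2 -> al t <= C * p t) ->
  (forall t, phi t.+1 - phi t <= M * (al t + be t)) -> False.
Proof.
move=> p0 pB al0 be0 alz bez ald bed l12 C0 M0 H1 H2 H3.
set d := (l2 - l1) / 3.
have d0 : 0 < d by rewrite /d divr_gt0 //; lra.
have d3 : 3 * d = l2 - l1 by rewrite /d; field.
have e0 : 0 < d / (2 * M + 2) by rewrite divr_gt0 //; lra.
have [Na HNa] := alz _ e0.
have [Nb HNb] := bez _ e0.
have e1 : 0 < d / (2 * C * M + 1).
  by rewrite divr_gt0 //; have := mulr_ge0 C0 M0; lra.
have [Np HNp] := tail_small p0 pB _ e1.
set N := maxn N0 (maxn Na (maxn Nb Np)).
have N0N : (N0 <= N)%N by rewrite leq_maxl.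
have NaN : (Na <= N)%N by rewrite /N (leq_trans (leq_maxl _ _) (leq_maxr _ _)).
have NbN : (Nb <= N)%N.
  by rewrite /N (leq_trans (leq_maxl _ _) (leq_trans (leq_maxr _ _) (leq_maxr _ _))).
have NpN : (Np <= N)%N.
  by rewrite /N (leq_trans (leq_maxr _ _) (leq_trans (leq_maxr _ _) (leq_maxr _ _))).
have step : forall t, (N <= t)%N -> M * (al t + be t) < d.
  move=> t Nt.
  have ha := HNa t (leq_trans NaN Nt); have hb := HNb t (leq_trans NbN Nt).
  have : d / (2 * M + 2) * (2 * M + 2) = d by field; lra.
  have : M * (al t + be t) <= M * (2 * (d / (2 * M + 2))).
    by apply: ler_wpM2l => //; lra.
  nra.
have [s [Ns phis]] : exists s, (N <= s)%N /\ phi s < l1.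
  apply: contrapT => Hn.
  apply: (dom_contra be0 p0 C0 pB bed (N := N)) => t Nt.
  apply: H1; first exact: leq_trans N0N Nt.
  rewrite leNgt; apply/negP => ph; apply: Hn; by exists t.
have tail : forall j, 2 * C * M * \sum_(s <= k < s + j) p k < d.
  move=> j; have := HNp s (s + j)%N (leq_trans NpN Ns).
  set T := \sum_(s <= k < s + j) p k => HT.
  have T0 : 0 <= T by apply: psum_ge0.
  have CM : 0 <= 2 * C * M by rewrite mulr_ge0 // mulr_ge0.
  have : T * (2 * C * M + 1) < d.
    by rewrite -ltr_pdivlMr //; lra.
  nra.
have ind : forall j, phi (s + j)%N <= l1 + d + 2 * C * M * \sum_(s <= k < s + j) p k.
  elim => [|j IH].
    by rewrite addn0 big_geq // mulr0 addr0; lra.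
  have Nsj : (N <= s + j)%N by exact: leq_trans Ns (leq_addr _ _).
  have st := step _ Nsj.
  have hst := H3 (s + j)%N.
  rewrite addnS big_nat_recr /= ?leq_addr //.
  have pp := p0 (s + j)%N.
  have Sg : 0 <= \sum_(s <= k < s + j) p k by apply: psum_ge0.
  have CM : 0 <= 2 * C * M by rewrite mulr_ge0 // mulr_ge0.
  have [lt|ge] := ltP (phi (s + j)%N) l1.
    have : 0 <= 2 * C * M * (\sum_(s <= k < s + j) p k + p (s + j)%N).
      by apply: mulr_ge0 => //; lra.
    lra.
  have tj := tail j.
  have hb := H1 _ (leq_trans N0N Nsj) ge.
  have IHl : phi (s + j)%N <= l2 by lra.
  have ha := H2 _ (leq_trans N0N Nsj) IHl.
  have : M * (al (s + j)%N + be (s + j)%N) <= M * (2 * C * p (s + j)%N).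
    by apply: ler_wpM2l => //; lra.
  lra.
apply: (dom_contra al0 p0 C0 pB ald (N := s)) => t st.
apply: H2; first exact: leq_trans N0N (leq_trans Ns st).
have := ind (t - s)%N; rewrite subnKC // => ht.
have := tail (t - s)%N; rewrite subnKC //; lra.
Qed.

End Seqs.

Section Topo.
Context {R : realType} {m : nat}.
Local Notation vec := 'rV[R]_m.

Lemma near_oo (P : nat -> Prop) N : (forall t, (N <= t)%N -> P t) -> \forall t \near \oo, P t.
Proof. by move=> H; exists N. Qed.

Lemma mxnorm_le (v : vec) : `|v| <= norm2 v.
Proof.
rewrite [`|v|]mx_normrE; apply: bigmax_le => [|ij _]; first exact: norm2_ge0.
by rewrite (ord1 ij.1); exact: coord_le.
Qed.

Lemma entry_le (v : vec) k : `|v ord0 k| <= `|v|.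
Proof.
rewrite [`|v|]mx_normrE.
exact: (le_bigmax _ (fun ij : 'I_1 * 'I_m => `|v ij.1 ij.2|) (ord0, k)).
Qed.

Lemma cluster_seq (u : nat -> vec) (Mb : R) :
  (forall k i, `|u k ord0 i| <= Mb) ->
  exists xs, forall e, 0 < e -> forall N, exists k, (N <= k)%N /\ `|xs - u k| < e.
Proof.
move=> Hb.
have cA := @rV_compact _ m (fun _ => `[- Mb, Mb]%classic) (fun _ => @segment_compact _ _ _).
have FA : (u @ \oo) [set v | (forall i : 'I_m, `[- Mb, Mb]%classic (v ord0 i))].
  exists 0%N => // k _ i /=; rewrite in_itv /= -ler_norml; exact: Hb.
have [xs [_ Hcl]] := cA (u @ \oo) _ FA.
exists xs => e e0 N.
have := Hcl [set v | exists2 k, (N <= k)%N & v = u k] (ball xs e).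
case.
- by exists N => // k Nk; exists k.
- exact: nbhsx_ballx.
move=> v [[k Nk ->]] /=; rewrite -ball_normE /= => H.
by exists k.
Qed.

End Topo.

Section Main.
Context {R : realType} {n m : nat}.
Local Notation vec := 'rV[R]_m.
Variables (g : 'I_n -> vec -> R) (X : 'I_n -> set vec)
  (G P : 'I_n -> vec -> vec) (a : 'I_n -> 'I_n -> R) (K h : R)
  (alpha beta : nat -> R) (x : 'I_n -> nat -> vec).
Hypothesis HXc : forall i, convex_set (X i).
Hypothesis HP : forall i, is_projection (X i) (P i).
Hypothesis HG : forall i, is_plus_subgradient_sel (g i) (G i).
Hypothesis asym : forall i j, a i j = a j i.
Hypothesis a_ge0 : forall i j, 0 <= a i j.
Hypothesis conn : graph_connected a.
Variable z0 : vec.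
Hypothesis Hz0g : forall i, g i z0 <= 0.
Hypothesis Hz0X : forall i, X i z0.
Hypothesis K0 : 0 <= K.
Hypothesis HK : forall i y, norm2 (G i y) <= K.
Hypothesis Hal : forall t, 0 <= alpha t <= 1.
Hypothesis Hald : \sum_(0 <= k < t) alpha k @[t --> \oo] --> +oo.
Hypothesis Hal2 : cvg (\sum_(0 <= k < t) alpha k ^+ 2 @[t --> \oo]).
Hypothesis Hbe : forall t, 0 <= beta t.
Hypothesis Hbed : \sum_(0 <= k < t) beta k @[t --> \oo] --> +oo.
Hypothesis Hbe2 : cvg (\sum_(0 <= k < t) beta k ^+ 2 @[t --> \oo]).
Hypothesis h0 : 0 < h.
Hypothesis hdeg : forall i, h * (\sum_(j < n) a i j) < 1.
Hypothesis Hdyn : forall i t, x i t.+1 =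
     x i t + control a h G P (alpha t) (beta t) (fun j => x j t) i.

Definition yv t i := \sum_(j < n) wt a h i j *: x j t.
Definition xiv t i := yv t i - beta t *: G i (yv t i).
Definition ddv t i := xiv t i - P i (xiv t i).
Definition V z t := \sum_(i < n) nsq (x i t - z).
Definition pr t := \sum_(i < n) (Dis a h (fun j => x j t) i +
   (2 * beta t * gp (g i) (yv t i) + alpha t * nsq (ddv t i))).
Definition cc t := n%:R * (beta t ^+ 2 * K ^+ 2).

Lemma al0 t : 0 <= alpha t. Proof. by case/andP: (Hal t). Qed.
Lemma al1 t : alpha t <= 1. Proof. by case/andP: (Hal t). Qed.

Lemma dyn t i : x i t.+1 = xiv t i - alpha t *: ddv t i.
Proof.
rewrite Hdyn /control /= !addrA (cons_eq a h a_ge0 (fun j => x j t) i).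
by rewrite -/(yv t i).
Qed.

Lemma pr_ge0 t : 0 <= pr t.
Proof.
apply: sumr_ge0 => i _; apply: addr_ge0; first exact: Dis_ge0.
apply: addr_ge0; apply: mulr_ge0; rewrite ?nsq_ge0 ?gp_ge0 ?al0 //.
by rewrite mulr_ge0.
Qed.

Lemma cc_ge0 t : 0 <= cc t.
Proof. by rewrite /cc !mulr_ge0 ?sqr_ge0. Qed.

Lemma V_ge0 z t : 0 <= V z t.
Proof. by apply: sumr_ge0 => i _; exact: nsq_ge0. Qed.

Lemma step_ineq z t : (forall i, g i z <= 0) -> (forall i, X i z) ->
  V z t.+1 <= V z t - pr t + cc t.
Proof.
move=> Hzg HzX.
have per : forall i, nsq (x i t.+1 - z) <= nsq (yv t i - z) + beta t ^+ 2 * K ^+ 2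
     - (2 * beta t * gp (g i) (yv t i) + alpha t * nsq (ddv t i)).
  move=> i; rewrite dyn /ddv.
  have h1 := proj_step (alpha t) (xiv t i) z (HP i) (HXc i) (HzX i) (al0 t) (al1 t).
  have h2 := sub_step K z (yv t i) (beta t) (HG i) (HK i) (Hzg i) (Hbe t).
  rewrite /xiv in h1 h2 *.
  lra.
apply: le_trans (ler_sum _ (fun i _ => per i)) _.
rewrite sumrB big_split /= sumr_const card_ord -/(cc t).
have := cons_V a h asym (fun j => x j t) z.
rewrite -/(V z t) => E.
have E' : \sum_(i < n) nsq (yv t i - z) + \sum_(i < n) Dis a h (fun j => x j t) i
   = V z t := E.
rewrite /pr [X in V z t - X]big_split /= /cc -mulr_natl.
lra.
Qed.


Definition Cb := limn (fun t => \sum_(0 <= k < t) beta k ^+ 2).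

Lemma be2_bound t : \sum_(0 <= k < t) beta k ^+ 2 <= Cb.
Proof. by apply: (series_bound (fun k => beta k ^+ 2)) => // k; exact: sqr_ge0. Qed.

Definition CB := n%:R * K ^+ 2 * Cb.

Lemma cc_sum s t : \sum_(s <= k < t) cc k = n%:R * K ^+ 2 * \sum_(s <= k < t) beta k ^+ 2.
Proof.
by rewrite /cc -mulr_sumr -mulr_suml; ring.
Qed.

Lemma cc_bound t : \sum_(0 <= k < t) cc k <= CB.
Proof.
rewrite cc_sum /CB; apply: ler_wpM2l; first by rewrite mulr_ge0 ?sqr_ge0.
exact: be2_bound.
Qed.

Lemma telesc z t : (forall i, g i z <= 0) -> (forall i, X i z) ->
  V z t + \sum_(0 <= k < t) pr k <= V z 0 + \sum_(0 <= k < t) cc k.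
Proof.
move=> Hzg HzX; elim: t => [|t IH]; first by rewrite !big_geq.
rewrite !big_nat_recr //=.
have := step_ineq z t Hzg HzX; lra.
Qed.

Lemma V_tail z s j : (forall i, g i z <= 0) -> (forall i, X i z) ->
  V z (s + j) <= V z s + \sum_(s <= k < s + j) cc k.
Proof.
move=> Hzg HzX; elim: j => [|j IH]; first by rewrite addn0 big_geq // addr0.
rewrite addnS big_nat_recr /= ?leq_addr //.
have := step_ineq z (s + j) Hzg HzX; have := pr_ge0 (s + j); lra.
Qed.

Definition Bp := V z0 0 + CB.

Lemma pr_sum t : \sum_(0 <= k < t) pr k <= Bp.
Proof.
have := telesc z0 t Hz0g Hz0X; have := cc_bound t; have := V_ge0 z0 t.
rewrite /Bp; lra.
Qed.

Lemma V0_bound t : V z0 t <= Bp.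
Proof.
have := telesc z0 t Hz0g Hz0X; have := cc_bound t.
have : 0 <= \sum_(0 <= k < t) pr k by apply: psum_ge0; exact: pr_ge0.
rewrite /Bp; lra.
Qed.

Lemma Dis_le_pr t i : Dis a h (fun j => x j t) i <= pr t.
Proof.
rewrite /pr (bigD1 i) //=.
have : 0 <= \sum_(j < n | j != i) (Dis a h (fun j0 => x j0 t) j +
     (2 * beta t * gp (g j) (yv t j) + alpha t * nsq (ddv t j))).
  apply: sumr_ge0 => j _; apply: addr_ge0; first exact: Dis_ge0.
  by apply: addr_ge0; apply: mulr_ge0; rewrite ?nsq_ge0 ?gp_ge0 ?al0 ?mulr_ge0.
have : 0 <= 2 * beta t * gp (g i) (yv t i) + alpha t * nsq (ddv t i).
  by apply: addr_ge0; apply: mulr_ge0; rewrite ?nsq_ge0 ?gp_ge0 ?al0 ?mulr_ge0.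
lra.
Qed.

Definition close i j := forall e, 0 < e -> exists N, forall t, (N <= t)%N ->
  nsq (x i t - x j t) < e.

Lemma close_refl i : close i i.
Proof. by move=> e e0; exists 0%N => t _; rewrite subrr /nsq dotv0l. Qed.

Lemma close_sym i j : close i j -> close j i.
Proof.
move=> H e e0; have [N HN] := H e e0; exists N => t Nt; rewrite nsq_sym; exact: HN.
Qed.

Lemma close_trans i j k : close i j -> close j k -> close i k.
Proof.
move=> H1 H2 e e0.
have e4 : 0 < e / 4 by rewrite divr_gt0.
have [N1 HN1] := H1 _ e4; have [N2 HN2] := H2 _ e4.
exists (maxn N1 N2) => t Nt.
have := HN1 t (leq_trans (leq_maxl _ _) Nt); have := HN2 t (leq_trans (leq_maxr _ _) Nt).
have -> : x i t - x k t = (x i t - x j t) + (x j t - x k t) by rewrite addrA subrK.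
have := nsq_le2 (x i t - x j t) (x j t - x k t).
have : e / 4 * 4 = e by field.
lra.
Qed.

Lemma close_adj i k : adj a i k -> close i k.
Proof.
move=> aik; apply: close_sym => e e0.
set c := 2 / wt a h i k + 2 / wt a h i i.
have c0 : 0 < c.
  by rewrite /c addr_gt0 // divr_gt0 // ?(wt_adj a h h0 _ _ aik) ?(wt_diag a h a_ge0 h0 hdeg).
have [N HN] := small_eventually pr_ge0 pr_sum (e / c) (divr_gt0 e0 c0).
exists N => t Nt.
have H1 := Dis_edge a h a_ge0 h0 hdeg (fun j => x j t) i k aik.
have H2 := Dis_le_pr t i.
have H3 := HN t Nt.
rewrite -/c /= in H1.
have : c * pr t < e by rewrite mulrC -ltr_pdivlMr.
have : c * Dis a h (fun j => x j t) i <= c * pr t by rewrite ler_pM2l.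
lra.
Qed.

Lemma close_all i j : close i j.
Proof.
have := conn i j; move=> /connectP [p Hp ->] {j}.
elim: p i Hp => [|k p IH] i /=; first by move=> _; exact: close_refl.
case/andP => aik Hp; exact: (close_trans _ _ _ (close_adj _ _ aik) (IH k Hp)).
Qed.


Lemma unif (I : finType) (Q : I -> nat -> Prop) :
  (forall i, exists N, forall t, (N <= t)%N -> Q i t) ->
  exists N, forall t, (N <= t)%N -> forall i, Q i t.
Proof.
move=> H; have [f Hf] := fin_all_exists H.
exists (\max_i f i) => t Nt i; apply: Hf; apply: leq_trans Nt.
exact: (leq_bigmax i).
Qed.

Lemma sq_small (u : nat -> R) : (forall k, 0 <= u k) ->
  cvg (\sum_(0 <= k < t) u k ^+ 2 @[t --> \oo]) ->
  forall e, 0 < e -> exists N, forall t, (N <= t)%N -> u t < e.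
Proof.
move=> u0 cu e e0.
have [N HN] := small_eventually (u := fun k => u k ^+ 2) (fun k => sqr_ge0 _)
  (series_bound (fun k => u k ^+ 2) (fun k => sqr_ge0 _) cu) (e ^+ 2) (exprn_gt0 2 e0).
exists N => t Nt; have := HN t Nt; have := u0 t.
nra.
Qed.

Lemma be_small e : 0 < e -> exists N, forall t, (N <= t)%N -> beta t < e.
Proof. exact: sq_small Hbe Hbe2 e. Qed.

Lemma al_small e : 0 < e -> exists N, forall t, (N <= t)%N -> alpha t < e.
Proof. exact: sq_small al0 Hal2 e. Qed.

Hypothesis n0 : (0 < n)%N.

Lemma nR : 0 < n%:R :> R.
Proof. by rewrite ltr0n. Qed.

Definition xbar t := n%:R^-1 *: \sum_(i < n) x i t.

Lemma sum_y t : \sum_(i < n) yv t i = \sum_(i < n) x i t.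
Proof. exact: (sum_mix a h asym (fun j => x j t)). Qed.

Lemma xbar_step t : xbar t.+1 - xbar t =
  n%:R^-1 *: \sum_(i < n) (- (beta t *: G i (yv t i)) - alpha t *: ddv t i).
Proof.
rewrite /xbar -scalerBr -(sum_y t) -sumrB; congr (_ *: _); apply: eq_bigr => i _.
rewrite dyn /xiv.
by rewrite addrAC [_ + - yv t i]addrAC subrr add0r.
Qed.

Definition D := Num.sqrt (Bp + Cb * K ^+ 2).

Lemma be_sq_bound t : beta t ^+ 2 <= Cb.
Proof.
apply: le_trans (be2_bound t.+1).
rewrite big_nat_recr //= lerDr; apply: psum_ge0 => k; exact: sqr_ge0.
Qed.

Lemma y_bound t i : nsq (yv t i - z0) <= Bp.
Proof.
apply: le_trans (V0_bound t).
have E := cons_V a h asym (fun j => x j t) z0.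
have : 0 <= \sum_(i < n) Dis a h (fun j => x j t) i.
  by apply: sumr_ge0 => j _; exact: Dis_ge0.
have : nsq (yv t i - z0) <= \sum_(i < n) nsq (yv t i - z0).
  rewrite (bigD1 i) //= lerDl; apply: sumr_ge0 => j _; exact: nsq_ge0.
rewrite /V -E /yv; lra.
Qed.

Lemma dd_bound t i : norm2 (ddv t i) <= D.
Proof.
rewrite /ddv; apply: le_trans (proj_le _ z0 (HP i) (Hz0X i)) _.
rewrite /D norm2E ler_sqrt; last first.
  have Bp0 : 0 <= Bp by exact: le_trans (V_ge0 z0 0) (V0_bound 0).
  have Cb0 : 0 <= Cb by exact: le_trans (sqr_ge0 _) (be_sq_bound 0).
  by apply: addr_ge0 => //; apply: mulr_ge0 => //; exact: sqr_ge0.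
have h2 := sub_step K z0 (yv t i) (beta t) (HG i) (HK i) (Hz0g i) (Hbe t).
have := y_bound t i; have := be_sq_bound t; have := gp_ge0 (g i) (yv t i).
have := Hbe t; have : 0 <= K ^+ 2 by exact: sqr_ge0.
rewrite /xiv in h2 *.
have : beta t ^+ 2 * K ^+ 2 <= Cb * K ^+ 2 by apply: ler_wpM2r; [exact: sqr_ge0 | exact: be_sq_bound].
have : 0 <= 2 * beta t * gp (g i) (yv t i) by rewrite !mulr_ge0 ?gp_ge0.
lra.
Qed.

Lemma norm_xbar_step t : norm2 (xbar t.+1 - xbar t) <= beta t * K + alpha t * D.
Proof.
rewrite xbar_step norm2Z ger0_norm ?invr_ge0 ?ler0n //.
set c := beta t * K + alpha t * D.
have S : \sum_(i < n) norm2 (- (beta t *: G i (yv t i)) - alpha t *: ddv t i)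
    <= \sum_(i < n) c.
  apply: ler_sum => i _.
  apply: le_trans (norm2D _ _) _; rewrite !norm2N !norm2Z !ger0_norm ?al0 ?Hbe //.
  apply: lerD; apply: ler_wpM2l; rewrite ?al0 ?Hbe ?HK ?dd_bound //.
have T := norm2_sum _ (index_enum 'I_n) xpredT
  (fun i => - (beta t *: G i (yv t i)) - alpha t *: ddv t i).
rewrite sumr_const card_ord -mulr_natl in S.
have ni : 0 <= n%:R^-1 :> R by rewrite invr_ge0 ler0n.
apply: le_trans (ler_wpM2l ni (le_trans T S)) _.
by rewrite mulrA mulVf ?mul1r // gt_eqF // nR.
Qed.


Lemma avg_bound (f : 'I_n -> vec) c : (forall j, norm2 (f j) <= c) ->
  norm2 (n%:R^-1 *: \sum_(j < n) f j) <= c.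
Proof.
move=> H; rewrite norm2Z ger0_norm ?invr_ge0 ?ler0n //.
have T := norm2_sum _ (index_enum 'I_n) xpredT f.
have S : \sum_(j < n) norm2 (f j) <= \sum_(j < n) c by apply: ler_sum => j _.
rewrite sumr_const card_ord -mulr_natl in S.
have ni : 0 <= n%:R^-1 :> R by rewrite invr_ge0 ler0n.
apply: le_trans (ler_wpM2l ni (le_trans T S)) _.
by rewrite mulrA mulVf ?mul1r // gt_eqF // nR.
Qed.

Lemma close_pair e : 0 < e -> exists N, forall t, (N <= t)%N ->
  forall ij : 'I_n * 'I_n, norm2 (x ij.1 t - x ij.2 t) <= e.
Proof.
move=> e0; apply: (unif _ (fun ij t => norm2 (x ij.1 t - x ij.2 t) <= e)) => ij.
have [N HN] := close_all ij.1 ij.2 _ (exprn_gt0 2 e0).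
exists N => t Nt; apply: ltW; rewrite norm2_lt_r //; exact: HN.
Qed.

Lemma bar_eq t i : x i t - xbar t = n%:R^-1 *: \sum_(j < n) (x i t - x j t).
Proof.
rewrite sumrB sumr_const card_ord scalerBr.
have -> : x i t *+ n = (n%:R : R) *: x i t by rewrite scaler_nat.
rewrite scalerA mulVf ?scale1r //.
by rewrite gt_eqF // nR.
Qed.

Lemma close_bar e : 0 < e -> exists N, forall t, (N <= t)%N ->
  forall i, norm2 (x i t - xbar t) <= e.
Proof.
move=> e0; have [N HN] := close_pair _ e0; exists N => t Nt i.
rewrite bar_eq; apply: avg_bound => j; exact: (HN t Nt (i, j)).
Qed.

Lemma y_eq t i : yv t i - xbar t = \sum_(j < n) wt a h i j *: (x j t - xbar t).
Proof.
under eq_bigr do rewrite scalerBr.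
by rewrite sumrB -scaler_suml wt_sum1 scale1r.
Qed.

Lemma close_y e : 0 < e -> exists N, forall t, (N <= t)%N ->
  forall i, norm2 (yv t i - xbar t) <= e.
Proof.
move=> e0; have [N HN] := close_bar _ e0; exists N => t Nt i.
rewrite y_eq; apply: le_trans (norm2_sum _ _ _ _) _.
apply: le_trans (_ : \sum_(j < n) wt a h i j * e <= _); last first.
  by rewrite -mulr_suml wt_sum1 mul1r.
apply: ler_sum => j _; rewrite norm2Z ger0_norm ?(wt_ge0 a h a_ge0 h0 hdeg) //.
by apply: ler_wpM2l; [exact: (wt_ge0 a h a_ge0 h0 hdeg) | exact: HN].
Qed.

Lemma close_xi e : 0 < e -> exists N, forall t, (N <= t)%N ->
  forall i, norm2 (xiv t i - xbar t) <= e.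
Proof.
move=> e0.
have e2 : 0 < e / 2 by rewrite divr_gt0.
have e3 : 0 < e / (2 * (K + 1)) by apply: divr_gt0 => //; have := K0; lra.
have [N1 HN1] := close_y _ e2; have [N2 HN2] := be_small _ e3.
exists (maxn N1 N2) => t Nt i.
have h1 := HN1 t (leq_trans (leq_maxl _ _) Nt) i.
have h2 := HN2 t (leq_trans (leq_maxr _ _) Nt).
have -> : xiv t i - xbar t = (yv t i - xbar t) + (- (beta t *: G i (yv t i))).
  by rewrite /xiv addrAC.
apply: le_trans (norm2D _ _) _; rewrite norm2N norm2Z ger0_norm ?Hbe //.
have hk := HK i (yv t i).
have hb : beta t * (2 * (K + 1)) < e by rewrite -ltr_pdivlMr //; have := K0; lra.
have := Hbe t.
nra.
Qed.

Definition aF (z : vec) := \sum_(i < n) gp (g i) z.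
Definition bF (z : vec) := \sum_(i < n) norm2 (z - P i z).

Lemma aF_ge0 z : 0 <= aF z.
Proof. by apply: sumr_ge0 => i _; exact: gp_ge0. Qed.

Lemma bF_ge0 z : 0 <= bF z.
Proof. by apply: sumr_ge0 => i _; exact: norm2_ge0. Qed.

Lemma aF_lip u v : aF u - aF v <= n%:R * K * norm2 (u - v).
Proof.
rewrite /aF -sumrB.
apply: le_trans (_ : \sum_(i < n) K * norm2 (u - v) <= _).
  by apply: ler_sum => i _; exact: (gp_lip K u v (HG i) (HK i)).
by rewrite sumr_const card_ord -mulrA mulr_natl.
Qed.

Lemma bF_lip u v : bF u - bF v <= n%:R * norm2 (u - v).
Proof.
rewrite /bF -sumrB.
apply: le_trans (_ : \sum_(i < n) norm2 (u - v) <= _).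
  apply: ler_sum => i _; have := dist_lip u v (HP i); lra.
by rewrite sumr_const card_ord mulr_natl.
Qed.

Lemma pr_ge_gp t : 2 * beta t * \sum_(i < n) gp (g i) (yv t i) <= pr t.
Proof.
rewrite mulr_sumr /pr; apply: ler_sum => i _.
have := Dis_ge0 a h a_ge0 h0 hdeg (fun j => x j t) i.
have : 0 <= alpha t * nsq (ddv t i) by rewrite mulr_ge0 ?al0 ?nsq_ge0.
lra.
Qed.

Lemma pr_ge_dd t i : alpha t * nsq (ddv t i) <= pr t.
Proof.
rewrite /pr (bigD1 i) //=.
have : 0 <= \sum_(j < n | j != i) (Dis a h (fun j0 => x j0 t) j +
     (2 * beta t * gp (g j) (yv t j) + alpha t * nsq (ddv t j))).
  apply: sumr_ge0 => j _; apply: addr_ge0; first exact: Dis_ge0.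
  by apply: addr_ge0; apply: mulr_ge0; rewrite ?nsq_ge0 ?gp_ge0 ?al0 ?mulr_ge0.
have := Dis_ge0 a h a_ge0 h0 hdeg (fun j => x j t) i.
have : 0 <= 2 * beta t * gp (g i) (yv t i) by rewrite !mulr_ge0 ?gp_ge0.
lra.
Qed.

Lemma D_ge0 : 0 <= D.
Proof. exact: sqrtr_ge0. Qed.

Lemma liminf0 e N0 : 0 < e ->
  exists t, (N0 <= t)%N /\ aF (xbar t) + bF (xbar t) < e.
Proof.
move=> e0; apply: contrapT => Hn.
have H : forall t, (N0 <= t)%N -> e <= aF (xbar t) + bF (xbar t).
  move=> t Nt; rewrite leNgt; apply/negP => lt; apply: Hn; by exists t.
have K0' := K0.
have nR0 := nR.
have Kp : 0 < K + 1 by lra.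
set eta := e / (6 * n%:R * (K + 1)).
have eta0 : 0 < eta.
  by apply: divr_gt0 => //; apply: mulr_gt0 => //; apply: mulr_gt0.
have etaE : 6 * n%:R * (K + 1) * eta = e.
  by rewrite /eta; field; apply/andP; split; apply: lt0r_neq0.
have etaE6 : n%:R * (K + 1) * eta = e / 6.
  by rewrite -etaE; field.
have nKe : n%:R * K * eta <= e / 6.
  have : n%:R * K * eta <= n%:R * (K + 1) * eta.
    by apply: ler_wpM2r; [exact: ltW | apply: ler_wpM2l; [exact: ltW | lra]].
  lra.
have ne : n%:R * eta <= e / 6.
  have : n%:R * 1 * eta <= n%:R * (K + 1) * eta.
    by apply: ler_wpM2r; [exact: ltW | apply: ler_wpM2l; [exact: ltW | lra]].
  rewrite mulr1; lra.
have [N1 HN1] := close_y _ eta0; have [N2 HN2] := close_xi _ eta0.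
set N := maxn N0 (maxn N1 N2).
have N0N : (N0 <= N)%N by rewrite leq_maxl.
have N1N : (N1 <= N)%N by rewrite /N (leq_trans (leq_maxl _ _) (leq_maxr _ _)).
have N2N : (N2 <= N)%N by rewrite /N (leq_trans (leq_maxr _ _) (leq_maxr _ _)).
set c := e / (12 * n%:R).
have c0 : 0 < c by apply: divr_gt0 => //; apply: mulr_gt0.
have cE : 12 * n%:R * c = e by rewrite /c; field; apply: lt0r_neq0.
set q := c ^+ 2.
have q0 : 0 < q by exact: exprn_gt0.
set C := 3 / e + 1 / q.
have C0 : 0 <= C by apply: addr_ge0; apply: ltW; apply: divr_gt0.
set M := n%:R * K * (K + D).
have D0 := D_ge0.
have M0 : 0 <= M by apply: mulr_ge0; [apply: mulr_ge0 => //; exact: ltW | lra].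
apply: (crossing (fun t => aF (xbar t)) pr alpha beta C M (e / 3) (2 * e / 3) N Bp
  pr_ge0 pr_sum al0 Hbe al_small be_small Hald Hbed _ C0 M0).
- lra.
- move=> t Nt /= ha.
  have gsum : e / 6 <= \sum_(i < n) gp (g i) (yv t i).
    have : aF (xbar t) - \sum_(i < n) gp (g i) (yv t i) <= n%:R * K * eta.
      rewrite /aF -sumrB.
      apply: le_trans (_ : \sum_(i < n) K * eta <= _); last first.
        by rewrite sumr_const card_ord -mulrA mulr_natl.
      apply: ler_sum => i _.
      apply: le_trans (gp_lip K (xbar t) (yv t i) (HG i) (HK i)) _.
      by rewrite norm2_sym; apply: ler_wpM2l => //; apply: HN1; exact: leq_trans N1N Nt.
    lra.
  have hp := pr_ge_gp t.
  have hb := Hbe t.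
  have : beta t * e <= 3 * pr t.
    have : 2 * beta t * (e / 6) <= 2 * beta t * \sum_(i < n) gp (g i) (yv t i).
      by apply: ler_wpM2l => //; rewrite mulr_ge0.
    have : 2 * beta t * (e / 6) * 3 = beta t * e by field.
    lra.
  move=> hbe.
  have : beta t <= 3 / e * pr t.
    rewrite mulrAC ler_pdivlMr // mulrC; lra.
  have : 0 <= 1 / q * pr t by apply: mulr_ge0; [apply: ltW; apply: divr_gt0 | exact: pr_ge0].
  rewrite /C mulrDl; lra.
- move=> t Nt /= ha.
  have hb : e / 3 <= bF (xbar t) by have := H t (leq_trans N0N Nt); lra.
  have dsum : e / 6 <= \sum_(i < n) norm2 (ddv t i).
    have : bF (xbar t) - \sum_(i < n) norm2 (ddv t i) <= n%:R * eta.
      rewrite /bF -sumrB.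
      apply: le_trans (_ : \sum_(i < n) eta <= _); last first.
        by rewrite sumr_const card_ord mulr_natl.
      apply: ler_sum => i _.
      have := dist_lip (xbar t) (xiv t i) (HP i).
      rewrite [norm2 (xbar t - xiv t i)]norm2_sym -/(ddv t i).
      have := HN2 t (leq_trans N2N Nt) i.
      lra.
    lra.
  have [i hi] : exists i, c < norm2 (ddv t i).
    apply: contrapT => Hc.
    have : \sum_(i < n) norm2 (ddv t i) <= \sum_(i < n) c.
      apply: ler_sum => i _; rewrite leNgt; apply/negP => lt; apply: Hc; by exists i.
    rewrite sumr_const card_ord -mulr_natl.
    have : n%:R * c * 12 = e by lra.
    nra.
  have hq : q <= nsq (ddv t i).
    have := hi; rewrite ltNge norm2_le_r; last exact: ltW.
    by rewrite -ltNge => /ltW.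
  have hp := pr_ge_dd t i.
  have ha0 := al0 t.
  have : alpha t * q <= pr t.
    by apply: le_trans hp; apply: ler_wpM2l.
  move=> haq.
  have : alpha t <= 1 / q * pr t.
    by rewrite mul1r mulrC ler_pdivlMr.
  have : 0 <= 3 / e * pr t by apply: mulr_ge0; [apply: ltW; apply: divr_gt0 | exact: pr_ge0].
  rewrite /C mulrDl; lra.
- move=> t /=.
  apply: le_trans (aF_lip _ _) _.
  have hs := norm_xbar_step t.
  have ha := al0 t; have hb := Hbe t.
  have : n%:R * K * norm2 (xbar t.+1 - xbar t) <= n%:R * K * (beta t * K + alpha t * D).
    by apply: ler_wpM2l => //; apply: mulr_ge0 => //; exact: ltW.
  have : n%:R * K * (beta t * K + alpha t * D) <= M * (alpha t + beta t).
    have -> : M * (alpha t + beta t) = n%:R * K * ((K + D) * (alpha t + beta t)).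
      by rewrite /M; ring.
    apply: ler_wpM2l; first by apply: mulr_ge0 => //; exact: ltW.
    nra.
  lra.
Qed.


Lemma inv_small (e : R) : 0 < e -> exists N, forall k, (N <= k)%N -> (k.+1%:R)^-1 < e.
Proof.
move=> e0; exists (Num.truncn (e^-1)) => k Nk.
have h1 := truncnS_gt (e^-1).
have h2 : (Num.truncn e^-1).+1%:R <= k.+1%:R :> R by rewrite ler_nat ltnS.
rewrite invf_plt ?posrE //; lra.
Qed.

Lemma Bp_ge0 : 0 <= Bp.
Proof. exact: le_trans (V_ge0 z0 0) (V0_bound 0). Qed.

Lemma xbar_bound t : norm2 (xbar t - z0) <= Num.sqrt Bp.
Proof.
have -> : xbar t - z0 = n%:R^-1 *: \sum_(i < n) (x i t - z0).
  rewrite sumrB sumr_const card_ord scalerBr.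
  have -> : z0 *+ n = (n%:R : R) *: z0 by rewrite scaler_nat.
  by rewrite scalerA mulVf ?scale1r // gt_eqF // nR.
apply: avg_bound => i.
rewrite norm2_le_r ?sqrtr_ge0 // sqr_sqrtr ?Bp_ge0 //.
apply: le_trans (V0_bound t).
rewrite /V (bigD1 i) //= lerDl; apply: sumr_ge0 => j _; exact: nsq_ge0.
Qed.

Lemma cluster_pt : exists xs : vec, (aF xs + bF xs <= 0) /\ (forall d, 0 < d -> forall N, exists s, (N <= s)%N /\ norm2 (xbar s - xs) <= d).
Proof.
have H : forall k, exists t, (k <= t)%N /\ aF (xbar t) + bF (xbar t) < (k.+1%:R)^-1.
  by move=> k; apply: liminf0; rewrite invr_gt0 ltr0Sn.
have [T HT] := choice H.
set u := fun k => xbar (T k).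
set Mb := Num.sqrt Bp + norm2 z0.
have ub : forall k i, `|u k ord0 i| <= Mb.
  move=> k i; apply: le_trans (coord_le _ _) _.
  have := norm2_tri (u k) z0 0; rewrite !subr0 => h1.
  apply: le_trans h1 _; apply: lerD; [exact: xbar_bound | by []].
have [xs Hxs] := cluster_seq u Mb ub.
have close2 : forall d, 0 < d -> forall N, exists k, (N <= k)%N /\ norm2 (u k - xs) <= d.
  move=> d d0 N.
  have m1 : 0 < m%:R + 1 :> R by rewrite ltr_wpDl ?ler0n.
  have e0 : 0 < d / (m%:R + 1) by rewrite divr_gt0.
  have [k [Nk hk]] := Hxs _ e0 N.
  exists k; split => //.
  rewrite norm2_sym norm2_le_r; last exact: ltW.
  have := nsq_le_max (xs - u k) (d / (m%:R + 1))
    (fun i => le_trans (entry_le _ i) (ltW hk)).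
  have : (d / (m%:R + 1)) * (m%:R + 1) = d by field; exact: lt0r_neq0.
  set f := d / (m%:R + 1).
  have f0 : 0 < f by [].
  have : 0 <= m%:R :> R by rewrite ler0n.
  nra.
exists xs; split; last first.
  move=> d d0 N; have [k [Nk hk]] := close2 d d0 N.
  exists (T k); split; last exact: hk.
  by apply: leq_trans Nk _; case: (HT k).
set A := aF xs + bF xs.
set c := 1 + n%:R * K + n%:R.
have c0 : 0 < c by rewrite /c; have := nR; have := K0; nra.
have key : forall e, 0 < e -> A < e * c.
  move=> e e0.
  have [N HN] := inv_small e e0.
  have [k [Nk hk]] := close2 e e0 N.
  have [_ hT] := HT k.
  have h1 := aF_lip xs (u k); have h2 := bF_lip xs (u k).
  rewrite norm2_sym in h1 h2.
  have h3 := HN k Nk.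
  set N2 := norm2 (u k - xs) in h1 h2 hk.
  have : n%:R * K * N2 <= n%:R * K * e.
    by apply: ler_wpM2l => //; apply: mulr_ge0; [exact: ltW nR | exact: K0].
  have : n%:R * N2 <= n%:R * e by apply: ler_wpM2l => //; exact: ltW nR.
  have hT' : aF (u k) + bF (u k) < k.+1%:R^-1 := hT.
  move=> q1 q2.
  have h4 : aF (u k) + bF (u k) < e := lt_trans hT' h3.
  have s1 : aF xs + bF xs <= aF (u k) + bF (u k) + n%:R * K * N2 + n%:R * N2 by lra.
  have s2 : aF xs + bF xs < e + n%:R * K * e + n%:R * e by lra.
  have -> : e * c = e + n%:R * K * e + n%:R * e by rewrite /c; ring.
  exact: s2.
rewrite leNgt; apply/negP => A0.
have := key (A / c) (divr_gt0 A0 c0).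
rewrite mulrAC mulfK ?ltxx //; exact: lt0r_neq0.
Qed.


Lemma xs_feas xs : aF xs + bF xs <= 0 -> (forall i, g i xs <= 0) /\ (forall i, X i xs).
Proof.
move=> hA.
have a0 := aF_ge0 xs; have b0 := bF_ge0 xs.
split => i.
  have : gp (g i) xs <= aF xs.
    rewrite /aF (bigD1 i) //= lerDl; apply: sumr_ge0 => j _; exact: gp_ge0.
  have H2 : g i xs <= gp (g i) xs by rewrite /gp le_max lexx.
  lra.
have hd : norm2 (xs - P i xs) <= bF xs.
  rewrite /bF (bigD1 i) //= lerDl; apply: sumr_ge0 => j _; exact: norm2_ge0.
have hn : norm2 (xs - P i xs) = 0.
  apply/eqP; rewrite eq_le norm2_ge0 andbT; lra.
move: hn; rewrite norm2E => /eqP; rewrite sqrtr_eq0 => hq.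
have hq0 : nsq (xs - P i xs) = 0 by apply/eqP; rewrite eq_le hq nsq_ge0.
have := nsq_eq0 _ hq0; move/eqP; rewrite subr_eq0 => /eqP ->.
by case: (HP i xs).
Qed.

Lemma conv_main : exists xs, ((forall i, g i xs <= 0) /\ (forall i, X i xs)) /\
    forall i, x i t @[t --> \oo] --> xs.
Proof.
have [xs [hA hcl]] := cluster_pt.
have [Fg FX] := xs_feas xs hA.
exists xs; split => // i.
apply/cvgrPdist_lt => e e0.
set eps := e ^+ 2.
have eps0 : 0 < eps by exact: exprn_gt0.
have nR0 := nR; have K0' := K0.
set L := n%:R * K ^+ 2.
have L0 : 0 <= L by rewrite mulr_ge0 ?sqr_ge0 // ltW.
have ec : 0 < eps / (2 * (L + 1)) by apply: divr_gt0 => //; lra.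
have [Nc HNc] := tail_small (fun k => sqr_ge0 (beta k)) be2_bound _ ec.
set d := eps / (8 * n%:R + eps).
have dp : 0 < 8 * n%:R + eps by lra.
have d0 : 0 < d by apply: divr_gt0.
have dE : d * (8 * n%:R + eps) = eps by rewrite /d; field; exact: lt0r_neq0.
have d1 : d <= 1.
  rewrite /d ler_pdivrMr // mul1r; lra.
have [Nb HNb] := close_bar _ d0.
have [s [Ns hs]] := hcl d d0 (maxn Nc Nb).
have Vs : V xs s <= eps / 2.
  apply: le_trans (_ : \sum_(j < n) (4 * d ^+ 2) <= _).
    apply: ler_sum => j _.
    have -> : x j s - xs = (x j s - xbar s) + (xbar s - xs) by rewrite addrA subrK.
    apply: le_trans (nsq_le2 _ _) _.
    have h1 : nsq (x j s - xbar s) <= d ^+ 2.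
      by rewrite -norm2_le_r ?(ltW d0) //; apply: HNb; exact: leq_trans (leq_maxr _ _) Ns.
    have h2 : nsq (xbar s - xs) <= d ^+ 2 by rewrite -norm2_le_r // ltW.
    lra.
  rewrite sumr_const card_ord -mulr_natl.
  have : d ^+ 2 <= d by rewrite expr2 ler_piMr // ltW.
  have : 0 <= n%:R :> R by exact: ltW.
  nra.
exists s => // t st /=.
have Vt : V xs t < eps.
  have := V_tail xs s (t - s) Fg FX; rewrite subnKC // => hV.
  have hT := HNc s t (leq_trans (leq_maxl _ _) Ns).
  have hT0 : 0 <= \sum_(s <= k < t) beta k ^+ 2 by apply: psum_ge0 => k; exact: sqr_ge0.
  rewrite cc_sum -/L in hV.
  have : L * \sum_(s <= k < t) beta k ^+ 2 <= (L + 1) * \sum_(s <= k < t) beta k ^+ 2.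
    by apply: ler_wpM2r => //; lra.
  have : (L + 1) * \sum_(s <= k < t) beta k ^+ 2 < eps / 2.
    have -> : eps / 2 = (L + 1) * (eps / (2 * (L + 1))) by field; lra.
    by rewrite ltr_pM2l //; lra.
  lra.
have hi : nsq (x i t - xs) < eps.
  apply: le_lt_trans Vt; rewrite /V (bigD1 i) //= lerDl.
  by apply: sumr_ge0 => j _; exact: nsq_ge0.
apply: le_lt_trans (mxnorm_le _) _.
by rewrite norm2_sym norm2_lt_r.
Qed.

End Main.

Lemma consensus_lemma {R : realType} {n m : nat} (a : 'I_n -> 'I_n -> R) (h : R)
  (x : 'I_n -> nat -> 'rV[R]_m) (C : 'I_n -> 'I_n -> Prop) :
  (forall i j, forall e, 0 < e -> exists N, forall t, (N <= t)%N ->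
     nsq (x i t - x j t) < e) ->
  forall i j, norm2 (x i t - x j t) @[t --> \oo] --> 0.
Proof.
move=> H i j; apply/cvgrPdist_lt => e e0.
have [N HN] := H i j (e ^+ 2) (exprn_gt0 2 e0).
exists N => // t Nt /=.
rewrite sub0r normrN ger0_norm ?norm2_ge0 // norm2_lt_r //; exact: HN.
Qed.

Theorem corollary3 (R : realType) (n m : nat)
  (g : 'I_n -> 'rV[R]_m -> R) (X : 'I_n -> set 'rV[R]_m)
  (G : 'I_n -> 'rV[R]_m -> 'rV[R]_m) (P : 'I_n -> 'rV[R]_m -> 'rV[R]_m)
  (a : 'I_n -> 'I_n -> R) (K h : R) (alpha beta : nat -> R)
  (x : 'I_n -> nat -> 'rV[R]_m) :
  (forall i, convex_fun (g i)) ->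
  (forall i, continuous (g i)) ->
  (forall i, closed (X i)) ->
  (forall i, convex_set (X i)) ->
  (forall i, is_projection (X i) (P i)) ->
  (forall i, is_plus_subgradient_sel (g i) (G i)) ->
  (forall i j, a i j = a j i) ->
  (forall i j, 0 <= a i j) ->
  (forall i, a i i = 0) ->
  graph_connected a ->
  (exists z, (forall i, g i z <= 0) /\ (forall i, X i z)) ->
  0 <= K ->
  (forall i y, norm2 (G i y) <= K) ->
  (forall t, 0 <= alpha t <= 1) ->
  (\sum_(0 <= k < t) alpha k @[t --> \oo] --> +oo) ->
  cvg (\sum_(0 <= k < t) alpha k ^+ 2 @[t --> \oo]) ->
  (forall t, 0 <= beta t) ->
  (\sum_(0 <= k < t) beta k @[t --> \oo] --> +oo) ->
  cvg (\sum_(0 <= k < t) beta k ^+ 2 @[t --> \oo]) ->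
  0 < h ->
  (forall i, h * (\sum_(j < n) a i j) < 1) ->
  (forall i t, x i t.+1 =
     x i t + control a h G P (alpha t) (beta t) (fun j => x j t) i) ->
  (forall i j, norm2 (x i t - x j t) @[t --> \oo] --> 0) /\
  exists xs, ((forall i, g i xs <= 0) /\ (forall i, X i xs)) /\
    forall i, x i t @[t --> \oo] --> xs.
Proof.
move=> _ _ _ HXc HP HG asym a_ge0 _ conn [z [Hzg HzX]] K0 HK Hal Hald Hal2
  Hbe Hbed Hbe2 h0 hdeg Hdyn.
split.
  apply: (consensus_lemma a h x (fun _ _ => True)) => i j.
  exact: (close_all g X G P a K h alpha beta x HXc HP HG asym a_ge0 conn z Hzg HzX
            HK Hal Hbe Hbe2 h0 hdeg Hdyn i j).
case: (posnP n) => [n0|npos].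
  have F : forall i : 'I_n, False.
    by move=> i; have := ltn_ord i; rewrite [X in (_ < X)%N]n0.
  exists 0; split; first by split => i; case: (F i).
  by move=> i; case: (F i).
exact: (conv_main g X G P a K h alpha beta x HXc HP HG asym a_ge0 conn z Hzg HzX
  K0 HK Hal Hald Hal2 Hbe Hbed Hbe2 h0 hdeg Hdyn npos).
Qed.
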